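(* Let $p$ be a prime, $q=p^r$, and let $l$ be an integer with $0\le l\le 2r-1$. Every root of the equation $X^{1+p^l}+1=0$ in $\mathrm{GF}(q^2)$ lies in $\mathrm{GF}(q)$ (equivalently, $\alpha^{1+p^l}+\beta^{1+p^l}\neq0$ for every basis $\{\alpha,\beta\}$ of $\mathrm{GF}(q^2)$ over $\mathrm{GF}(q)$) if and only if either (i) $p=2$ and $\gcd(2^l+1,2^r+1)=1$; or (ii) $p$ is odd and at least one of the following holds: (a) there is a power of two which divides $p^r-1$ but does not divide $p^l+1$, and $\gcd(p^l+1,p^r+1)=2$; (b) every power of two dividing $p^{2r}-1$ divides $p^l+1$. *)

(* Defs.v *)
From mathcomp Require Import all_boot all_order all_algebra all_field.
Set Implicit Arguments. Unset Strict Implicit. Unset Printing Implicit Defensive.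
Import GRing.Theory.
Local Open Scope ring_scope.

(* For a finite field F of order q^2 (q = p^r), the subfield GF(q) of F is
   the set of elements fixed by the q-th power Frobenius map x |-> x^q. *)
Definition in_GFq (F : finFieldType) (q : nat) (x : F) : bool := x ^+ q == x.

Definition roots_in_GFq (F : finFieldType) (p r l : nat) : Prop :=
  forall x : F, x ^+ (1 + p ^ l)%N + 1 = 0 -> in_GFq (p ^ r)%N x.

(* Main.v *)
Require Import Defs.
From mathcomp Require Import all_boot all_order all_algebra all_field.
From mathcomp Require Import cyclic zify.
Set Implicit Arguments. Unset Strict Implicit. Unset Printing Implicit Defensive.
Import GRing.Theory.


Lemma nt_char2 (q d : nat) : ~~ odd q -> 0 < q ->
  (forall j, j * d == 0 %[mod (q-1)*(q+1)] -> q + 1 %| j) <-> gcdn d (q+1) = 1.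
Proof.
move=> qev q0; split.
- move=> H.
  have /dvdnP [u Hu] : gcdn d (q+1) %| q + 1 by apply: dvdn_gcdr.
  have /dvdnP [v Hv] : gcdn d (q+1) %| d by apply: dvdn_gcdl.
  move: Hu Hv; set e := gcdn d (q+1) => Hu Hv.
  have u0 : 0 < u by move: Hu; case: (u) => //; lia.
  have := H ((q-1)*u).
  have -> : (q - 1) * u * d = (q-1)*(q+1)*v by rewrite Hv Hu; lia.
  rewrite modnMr mod0n => /(_ isT).

  rewrite Hu [(q-1)*u]mulnC dvdn_pmul2l // => He.
  have e2 : e %| 2.
    rewrite -(dvdn_addr 2 He); have -> : q - 1 + 2 = u * e by lia.
    exact: dvdn_mull.
  have eo : odd e.
    case Eo: (odd e) => //.
    have H2 : 2 %| e by rewrite dvdn2 Eo.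
    have : 2 %| q + 1 by rewrite Hu; apply: dvdn_mull.
    by rewrite dvdn2 oddD (negbTE qev).
  have := dvdn_leq (isT : 0 < 2) e2.
  move: eo; case: (e) => [|[|[|]]] //.
- move=> Hg j /eqP Hj.
  have : (q-1)*(q+1) %| j * d by rewrite /dvdn Hj mod0n.
  move/(dvdn_trans (dvdn_mull (q-1) (dvdnn (q+1)))).
  by rewrite Gauss_dvdl // /coprime gcdnC Hg.
Qed.
Lemma modM_eq (j d s : nat) : 0 < s ->
  j * d == s * (2*s+2) %[mod 2*s*(2*s+2)] ->
  exists t, j * d = t * (2*s*(2*s+2)) + s * (2*s+2).
Proof.
move=> s0 /eqP Hj; exists (j * d %/ (2*s*(2*s+2))).
rewrite [in LHS](divn_eq (j*d) (2*s*(2*s+2))) Hj modn_small //.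
have : 0 < s*(2*s+2) by rewrite muln_gt0; lia.
rewrite -mulnA; lia.
Qed.

Lemma logn2N (s : nat) : 0 < s ->
  logn 2 (2*s*(2*s+2)) = (logn 2 (s*(2*s+2))).+1.
Proof.
move=> s0; rewrite -mulnA lognM //; last by rewrite muln_gt0; lia.
Qed.

Lemma nt_odd (s d : nat) : 0 < s -> 0 < d -> ~~ odd d ->
  (forall j, j * d == s*(2*s+2) %[mod 2*s*(2*s+2)] -> 2*s+2 %| j) <->
  ((exists k, (2^k %| 2*s) && ~~ (2^k %| d) /\ gcdn d (2*s+2) = 2) \/
   (forall k, 2^k %| 2*s*(2*s+2) -> 2^k %| d)).
Proof.
move=> s0 d0 dev.
have N0 : 0 < 2*s*(2*s+2) by rewrite !muln_gt0; lia.
have M0 : 0 < s*(2*s+2) by rewrite !muln_gt0; lia.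
have NM : 2*s*(2*s+2) = 2 * (s*(2*s+2)) by rewrite mulnA.
split.
- move=> H.
  case Hb: (logn 2 (2*s*(2*s+2)) <= logn 2 d).
    right => k; rewrite !pfactor_dvdn // => Hk; exact: leq_trans Hk Hb.
  left; move/negbT: Hb; rewrite -ltnNge => Hb.
  case: (egcdn d (2*s*(2*s+2))) / (egcdnP (2*s*(2*s+2)) d0) => km kn Hk _.
  move: Hk; set g := gcdn d _ => Hk.
  have /dvdnP [h Hh] : g %| 2*s*(2*s+2) by apply: dvdn_gcdr.
  have hev : ~~ odd h.
    apply/negP => ho.
    have h0 : 0 < h by move: ho; case: (h).
    have g0 : 0 < g by rewrite gcdn_gt0 d0.
    have : logn 2 (2*s*(2*s+2)) = logn 2 g.
      by rewrite Hh lognM // logn_coprime // coprime2n.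
    have : logn 2 g <= logn 2 d by apply: dvdn_leq_log => //; apply: dvdn_gcdl.
    lia.
  move: hev; rewrite -dvdn2 => /dvdnP [h' Hh'].
  have Mg : s*(2*s+2) = h' * g.
    apply/eqP; rewrite -(eqn_pmul2l (isT : 0 < 2)) -NM Hh Hh'; apply/eqP; lia.
  set j0 := km * h'.
  have Hj0 : j0 * d = (kn * h') * (2*s*(2*s+2)) + s*(2*s+2).
    rewrite /j0 mulnAC Hk Mg mulnDl; lia.
  have R0 : 2*s+2 %| j0 by apply: H; rewrite Hj0 modnMDl.
  have /dvdnP [u Hu] : gcdn d (2*s+2) %| 2*s+2 by apply: dvdn_gcdr.
  have /dvdnP [v Hv] : gcdn d (2*s+2) %| d by apply: dvdn_gcdl.
  move: Hu Hv; set e := gcdn d (2*s+2) => Hu Hv.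
  have u0 : 0 < u by move: Hu; case: (u) => //; lia.
  have R1 : 2*s+2 %| j0 + 2*s*u.
    apply: H; rewrite mulnDl Hj0.
    have -> : 2*s*u*d = v * (2*s*(2*s+2)) by rewrite Hv Hu; lia.
    by rewrite addnAC -mulnDl modnMDl.
  rewrite (dvdn_addr _ R0) Hu [2*s*u]mulnC dvdn_pmul2l // in R1.
  have e2 : e %| 2.
    rewrite -(dvdn_addr 2 R1); have -> : 2*s + 2 = u * e by lia.
    exact: dvdn_mull.
  have e2' : 2 %| e.
    by rewrite dvdn_gcd dvdn2 dev /=; apply/dvdnP; exists (s+1); lia.
  exists (logn 2 (2*s)); split; last by apply/eqP; rewrite eqn_dvd e2 e2'.
  rewrite pfactor_dvdnn /=; apply/negP => Hkd.
  move/dvdnP: R0 => [m Hm].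
  have Hmd : m * d = kn * h' * (2*s) + s.
    apply/eqP; rewrite -(eqn_pmul2l (_ : 0 < 2*s+2)); apply/eqP; last by lia.
    rewrite mulnA [_ * m]mulnC -Hm Hj0; lia.
  have : 2 ^ logn 2 (2*s) %| s.
    rewrite -(@dvdn_addr _ _ s (dvdn_mull (kn * h') (pfactor_dvdnn 2 (2*s)))) -Hmd.
    exact: dvdn_mull.
  rewrite -(dvdn_pmul2l (isT : 0 < 2)) -expnS pfactor_dvdn //; last by lia.
  by rewrite ltnn.
- case.
  + move=> [k [/andP [Hk1 Hk2] Hg]] j /(modM_eq s0) [t Ht].
    move: dev; rewrite -dvdn2 => /dvdnP [d' Hd'].
    have Hg' : gcdn d' (s+1) = 1.
      apply/eqP; rewrite -(eqn_pmul2l (isT : 0 < 2)) muln_gcdr.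
      by rewrite [2 * d']mulnC -Hd' (_ : 2 * (s+1) = 2*s+2) ?Hg //; lia.
    have Hj : j * d' = (s+1) * (s * (2*t+1)).
      apply/eqP; rewrite -(eqn_pmul2l (isT : 0 < 2)); apply/eqP.
      rewrite mulnCA [2 * d']mulnC -Hd' Ht; lia.
    have : s + 1 %| j * d' by rewrite Hj dvdn_mulr.
    rewrite Gauss_dvdl; last by rewrite /coprime gcdnC Hg'.
    move=> /dvdnP [w Hw].
    have Hwd : w * d' = s * (2*t+1).
      apply/eqP; rewrite -(eqn_pmul2l (_ : 0 < s+1)); last by lia.
      by rewrite mulnA [_ * w]mulnC -Hw Hj.
    rewrite Hw (_ : 2*s+2 = 2 * (s+1)); last by lia.
    rewrite dvdn_pmul2r; last by lia.
    rewrite dvdn2; apply/negP => wo.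
    case: k Hk1 Hk2 => [|k] Hk1 Hk2; first by rewrite dvd1n in Hk2.
    rewrite expnS dvdn_pmul2l // in Hk1.
    move/negP: Hk2; apply.
    rewrite Hd' expnS [d' * 2]mulnC dvdn_pmul2l //.
    rewrite -(Gauss_dvdr _ (coprimeXl k (_ : coprime 2 w))); last by rewrite coprime2n.
    by rewrite Hwd dvdn_mulr.
  + move=> Hb j /(modM_eq s0) [t Ht]; exfalso.
    have H1 : 2 ^ logn 2 (2*s*(2*s+2)) %| j * d.
      by apply: dvdn_mull; apply: Hb; apply: pfactor_dvdnn.
    rewrite Ht dvdn_addr in H1; last by apply: dvdn_mull; apply: pfactor_dvdnn.
    rewrite pfactor_dvdn // logn2N // in H1.
    by rewrite ltnn in H1.
Qed.
Local Open Scope ring_scope.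

Lemma expf_cardN (F : finFieldType) (x : F) : x != 0 -> x ^+ #|F|.-1 = 1.
Proof.
move=> x0; apply: (mulIf x0); rewrite mul1r -exprSr prednK ?expf_card //.
exact: ltnW (finNzRing_gt1 F).
Qed.

Lemma prim_exists (F : finFieldType) : exists w : F, (#|F|.-1).-primitive_root w.
Proof.
have /hasP [w _ Hw] : has (#|F|.-1).-primitive_root (enum (predC1 (0 : F))); last by exists w.
apply: has_prim_root.
- by rewrite -ltnS prednK ?finNzRing_gt1 //; exact: ltnW (finNzRing_gt1 F).
- apply/allP => x; rewrite mem_enum inE => x0.
  by rewrite unity_rootE expf_cardN.
- exact: enum_uniq.
- by rewrite -cardE cardC1.
Qed.

Lemma reduce (F : finFieldType) (w : F) (q d c : nat) :
  (#|F|.-1).-primitive_root w -> #|F|.-1 = ((q-1)*(q+1))%N -> (1 < q)%N -> (0 < d)%N ->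
  w ^+ c = -1 ->
  (forall x : F, x ^+ d + 1 = 0 -> x ^+ q == x) <->
  (forall j, j * d == c %[mod (q-1)*(q+1)] -> q + 1 %| j)%N.
Proof.
move=> Hw HN q1 d0 Hc.
have key : forall i, ((w ^+ i) ^+ q == w ^+ i) = (q + 1 %| i)%N.
  move=> i.
  rewrite -exprM (eq_prim_root_expr Hw) eqn_mod_dvd; last by rewrite leq_pmulr; lia.
  rewrite -[X in (_ - X)%N]muln1 -mulnBr HN [((q-1)*(q+1))%N]mulnC dvdn_pmul2r //; lia.
have key2 : forall i, ((w ^+ i) ^+ d + 1 == 0) = (i * d == c %[mod (q-1)*(q+1)])%N.
  move=> i.
  by rewrite -exprM addr_eq0 -Hc (eq_prim_root_expr Hw) HN.
split.
- move=> H j Hj; rewrite -key; apply: H; apply/eqP; by rewrite key2.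
- move=> H x Hx.
  have x0 : x != 0.
    apply/negP => /eqP x0; move: Hx; rewrite x0 expr0n gtn_eqF // add0r => /eqP.
    by rewrite oner_eq0.
  case: (prim_rootP Hw (expf_cardN x0)) => i xi.
  rewrite xi key; apply: H; rewrite -key2 -xi; exact/eqP.
Qed.

Local Close Scope ring_scope.

Theorem proposition5 (p r l : nat) (F : finFieldType) :
  prime p -> (0 < r)%N -> (l <= 2 * r - 1)%N -> #|F| = (p ^ (2 * r))%N ->
  roots_in_GFq F p r l <->
  ((p = 2 /\ gcdn (2 ^ l + 1) (2 ^ r + 1) = 1)
   \/ (odd p /\
       ((exists k : nat, (2 ^ k %| p ^ r - 1) && ~~ (2 ^ k %| p ^ l + 1)
                         /\ gcdn (p ^ l + 1) (p ^ r + 1) = 2)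
        \/ (forall k : nat, 2 ^ k %| p ^ (2 * r) - 1 -> 2 ^ k %| p ^ l + 1)))).
Proof.
move=> pp r0 _ cardF.
have p1 := prime_gt1 pp.
have Eq2 : p ^ (2 * r) = p ^ r * p ^ r by rewrite mulnC expnM expnS expn1.
have q1 : 1 < p ^ r.
  apply: (leq_trans p1); rewrite -{1}(expn1 p) leq_pexp2l //; lia.
have d0 : 0 < 1 + p ^ l by lia.
have HN : #|F|.-1 = (p ^ r - 1) * (p ^ r + 1).
  rewrite cardF Eq2; move: q1; move: (p ^ r) => q q1; nia.
have [w Hw] := prim_exists F.
rewrite /roots_in_GFq /in_GFq.
case: (even_prime pp) => [p2|podd].
- have Hc : (w ^+ 0 = -1 :> F)%R.
    have := expf_card (-1 : F)%R.
    rewrite -signr_odd cardF oddX p2 /= orbF muln_eq0 (negbTE (lt0n_neq0 r0)) /= => <-.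
    by rewrite !expr0.
  rewrite (reduce Hw HN q1 d0 Hc).
  have := @nt_char2 (p ^ r) (1 + p ^ l).
  rewrite p2 oddX /= orbF => ->; [|by rewrite -lt0n|by rewrite expn_gt0].
  rewrite [1 + 2 ^ l]addnC; split => [H|[[_ H]|[H _]]] //; by left.
- have qodd : odd (p ^ r) by rewrite oddX podd orbT.
  have := odd_double_half (p ^ r); rewrite qodd => Hs.
  set s := (p ^ r)./2 in Hs.
  have s0 : 0 < s by lia.
  have HN' : #|F|.-1 = 2 * s * (2 * s + 2).
    rewrite HN -Hs; lia.
  have Hc : (w ^+ (s * (2 * s + 2)) = -1 :> F)%R.
    have : ((w ^+ (s * (2 * s + 2))) ^+ 2 == 1)%R.
      rewrite -exprM (_ : (s * (2 * s + 2) * 2 = #|F|.-1)%N).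
        by rewrite (prim_expr_order Hw).
      by rewrite HN'; lia.
    rewrite sqrf_eq1 => /orP [H1|/eqP //].
    rewrite -(prim_order_dvd Hw) HN' -mulnA in H1.
    have M0 : 0 < s * (2 * s + 2) by rewrite muln_gt0; lia.
    move: M0 (dvdn_leq M0 H1); move: (s * (2 * s + 2)) => M; lia.
  have HN2 : (p ^ r - 1) * (p ^ r + 1) = 2 * s * (2 * s + 2) by rewrite -HN HN'.
  rewrite (reduce Hw HN q1 d0 Hc) HN2.
  have dev : ~~ odd (1 + p ^ l) by rewrite oddD oddX podd orbT.
  have -> : p ^ r - 1 = 2 * s by lia.
  have -> : p ^ r + 1 = 2 * s + 2 by lia.
  rewrite (nt_odd s0 d0 dev).
  have -> : p ^ (2 * r) - 1 = 2 * s * (2 * s + 2) by rewrite -HN' cardF subn1.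
  rewrite [1 + p ^ l]addnC.
  split => [H|[[p2 _]|[_ H]]] //; first by right.
  by move: podd; rewrite p2.
Qed.
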